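(* Let $\mathbb X,\mathbb Y_1,\mathbb Y_2,\mathbb X^\sharp$ be sets, $c:\mathbb X\times\mathbb X^\sharp\to\overline{\mathbb R}$ a coupling, $\phi:\mathbb Y_1\times\mathbb X\times\mathbb Y_2\to\overline{\mathbb R}$, and $g_1:\mathbb Y_1\to\overline{\mathbb R}$, $g_2:\mathbb Y_2\to\overline{\mathbb R}$. Suppose there exist $\Gamma_1:\mathbb X^\sharp\times\mathbb Y_1\to\overline{\mathbb R}$ and $\Gamma_2:\mathbb X^\sharp\times\mathbb Y_2\to\overline{\mathbb R}$ such that $$\sup_{x\in\mathbb X}\big(c(x,x^\sharp)\mathbin{\underset{\cdot}{+}}(-\phi(y_1,x,y_2))\big)=\Gamma_1(x^\sharp,y_1)\mathbin{\underset{\cdot}{+}}\Gamma_2(x^\sharp,y_2)\quad\text{for all }(x^\sharp,y_1,y_2)\in\mathbb X^\sharp\times\mathbb Y_1\times\mathbb Y_2.$$ Then for all $x^\sharp\in\mathbb X^\sharp$, $$(g_1\square^{\phi}g_2)^{c}(x^\sharp)=\sup_{y_1\in\mathbb Y_1}\big(\Gamma_1(x^\sharp,y_1)\mathbin{\underset{\cdot}{+}}(-g_1(y_1))\big)\mathbin{\underset{\cdot}{+}}\sup_{y_2\in\mathbb Y_2}\big(\Gamma_2(x^\sharp,y_2)\mathbin{\underset{\cdot}{+}}(-g_2(y_2))\big).$$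
   Context: $\overline{\mathbb R}=[-\infty,+\infty]$. The Moreau lower addition $\mathbin{\underset{\cdot}{+}}$ is usual addition extended by $(+\infty)\mathbin{\underset{\cdot}{+}}(-\infty)=(-\infty)\mathbin{\underset{\cdot}{+}}(+\infty)=-\infty$; the Moreau upper addition $\mathbin{\overset{\cdot}{+}}$ is usual addition extended by $(+\infty)\mathbin{\overset{\cdot}{+}}(-\infty)=(-\infty)\mathbin{\overset{\cdot}{+}}(+\infty)=+\infty$. The generalized inf-convolution is $(g_1\square^{\phi}g_2)(x)=\inf_{y_1,y_2}\big(g_1(y_1)\mathbin{\overset{\cdot}{+}}\phi(y_1,x,y_2)\mathbin{\overset{\cdot}{+}} g_2(y_2)\big)$, and for $h:\mathbb X\to\overline{\mathbb R}$, $h^{c}(x^\sharp)=\sup_{x}\big(c(x,x^\sharp)\mathbin{\underset{\cdot}{+}}(-h(x))\big)$. *)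

(* Defs.v *)
From mathcomp Require Import all_boot all_order all_algebra.
From mathcomp Require Import all_classical all_reals ereal.
Set Implicit Arguments. Unset Strict Implicit. Unset Printing Implicit Defensive.
Import Order.TTheory GRing.Theory Num.Theory.
Local Open Scope classical_set_scope.
Local Open Scope ereal_scope.

(* Moreau lower addition: (+oo) + (-oo) = -oo.  This is mathcomp's [adde]. *)
Definition lower_add {R : realType} (a b : \bar R) : \bar R := adde a b.
(* Moreau upper addition: (+oo) + (-oo) = +oo.  This is mathcomp's [dual_adde]. *)
Definition upper_add {R : realType} (a b : \bar R) : \bar R := dual_adde a b.

Definition gen_infconv {R : realType} {X Y1 Y2 : Type}
  (phi : Y1 -> X -> Y2 -> \bar R) (g1 : Y1 -> \bar R) (g2 : Y2 -> \bar R)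
  (x : X) : \bar R :=
  ereal_inf (range (fun y : Y1 * Y2 =>
    upper_add (upper_add (g1 y.1) (phi y.1 x y.2)) (g2 y.2))).

Definition cconj {R : realType} {X Xs : Type} (c : X -> Xs -> \bar R)
  (h : X -> \bar R) (xs : Xs) : \bar R :=
  ereal_sup (range (fun x : X => lower_add (c x xs) (- h x))).

(* Main.v *)
Require Import Defs.
From mathcomp Require Import all_boot all_order all_algebra.
From mathcomp Require Import all_classical all_reals ereal.
Local Open Scope classical_set_scope.
Local Open Scope ereal_scope.
Import Order.TTheory GRing.Theory Num.Theory.

Section H.
Context {R : realType}.

Lemma sup_addl (I : Type) (f : I -> \bar R) (a : \bar R) :
  ereal_sup (range (fun i => a + f i)) = a + ereal_sup (range f).
Proof.
apply/le_anti/andP; split.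
  apply: ge_ereal_sup => _ [i _ <-]; apply: leeD2l.
  by apply: ereal_sup_ubound; exists i.
case: a => [r| |]; last by rewrite addNye leNye.
  rewrite -leeBrDl //; apply: ge_ereal_sup => _ [i _ <-].
  rewrite leeBrDl //; by apply: ereal_sup_ubound; exists i.
have [->|] := eqVneq (ereal_sup (range f)) -oo; first by rewrite addeNy leNye.
move=> /eqP Hne.
have [i Hi] : exists i, f i != -oo.
  case: (pselect (exists i, f i != -oo)) => // Hn; exfalso; apply: Hne.
  apply/ereal_sup_ninfty => _ [i _ <-].
  apply/eqP; apply: contra_notT Hn => H; by exists i.
have -> : ereal_sup (range (fun j => +oo + f j)) = +oo by apply: ereal_supy; exists i; [done|by rewrite addye].
exact: leey.
Qed.

Lemma sup_swap (I J : Type) (F : I -> J -> \bar R) :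
  ereal_sup (range (fun i => ereal_sup (range (fun j => F i j)))) =
  ereal_sup (range (fun j => ereal_sup (range (fun i => F i j)))).
Proof.
apply/le_anti/andP; split.
  apply: ge_ereal_sup => _ [i _ <-]; apply: ge_ereal_sup => _ [j _ <-].
  apply: le_ereal_sup_tmp; eexists; first by exists j.
  by apply: ereal_sup_ubound; exists i.
apply: ge_ereal_sup => _ [j _ <-]; apply: ge_ereal_sup => _ [i _ <-].
apply: le_ereal_sup_tmp; eexists; first by exists i.
by apply: ereal_sup_ubound; exists j.
Qed.

Lemma sup_pair (I J : Type) (F : I -> J -> \bar R) :
  ereal_sup (range (fun p : I * J => F p.1 p.2)) =
  ereal_sup (range (fun i => ereal_sup (range (fun j => F i j)))).
Proof.
apply/le_anti/andP; split.
  apply: ge_ereal_sup => _ [[i j] _ <-] /=.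
  apply: le_ereal_sup_tmp; eexists; first by exists i.
  by apply: ereal_sup_ubound; exists j.
apply: ge_ereal_sup => _ [i _ <-]; apply: ge_ereal_sup => _ [j _ <-].
by apply: ereal_sup_ubound; exists (i, j).
Qed.

Lemma oppe_inf_range (I : Type) (f : I -> \bar R) :
  - ereal_inf (range f) = ereal_sup (range (fun i => - f i)).
Proof.
rewrite /ereal_inf oppeK; congr ereal_sup.
by rewrite image_comp.
Qed.

End H.

Theorem proposition3 (R : realType) (X Y1 Y2 Xs : Type)
  (c : X -> Xs -> \bar R) (phi : Y1 -> X -> Y2 -> \bar R)
  (g1 : Y1 -> \bar R) (g2 : Y2 -> \bar R)
  (Gamma1 : Xs -> Y1 -> \bar R) (Gamma2 : Xs -> Y2 -> \bar R) :
  (forall (xs : Xs) (y1 : Y1) (y2 : Y2),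
     ereal_sup (range (fun x : X => lower_add (c x xs) (- phi y1 x y2)))
     = lower_add (Gamma1 xs y1) (Gamma2 xs y2)) ->
  forall xs : Xs,
    cconj c (gen_infconv phi g1 g2) xs
    = lower_add
        (ereal_sup (range (fun y1 : Y1 => lower_add (Gamma1 xs y1) (- g1 y1))))
        (ereal_sup (range (fun y2 : Y2 => lower_add (Gamma2 xs y2) (- g2 y2)))).
Proof.
move=> HG xs.
rewrite /cconj /gen_infconv /lower_add /upper_add.
have E1 : forall x : X,
  c x xs + - ereal_inf (range (fun y : Y1 * Y2 =>
      ((g1 y.1 + phi y.1 x y.2)%dE + g2 y.2)%dE))
  = ereal_sup (range (fun y : Y1 * Y2 =>
      (- g1 y.1 + - g2 y.2) + (c x xs + - phi y.1 x y.2))).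
  move=> x; rewrite oppe_inf_range -sup_addl; apply: (congr1 (fun g => ereal_sup (range g))).
  apply/funext => p /=.
  by rewrite !DualAddTheoryNumDomain.dual_addeE !oppeK (addeAC (- g1 _)) addeCA.
rewrite (funext E1).
rewrite sup_swap.
under eq_fun do rewrite sup_addl HG.
have E2 : forall p : Y1 * Y2,
  - g1 p.1 + - g2 p.2 + (Gamma1 xs p.1 + Gamma2 xs p.2)
  = (Gamma1 xs p.1 + - g1 p.1) + (Gamma2 xs p.2 + - g2 p.2).
  move=> p; by rewrite addeACA [_ + Gamma1 _ _]addeC [_ + Gamma2 _ _]addeC.
under eq_fun do rewrite E2.
rewrite (@sup_pair R _ _ (fun a b => Gamma1 xs a + - g1 a + (Gamma2 xs b + - g2 b))).
under eq_fun do rewrite sup_addl.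
transitivity (ereal_sup (range (fun y => ereal_sup (range (fun i => Gamma2 xs i - g2 i)) + (Gamma1 xs y - g1 y)))).
  apply: (congr1 (fun g => ereal_sup (range g))).
  apply/funext => i.
  exact: (addeC (Gamma1 xs i - g1 i) (ereal_sup (range (fun i => Gamma2 xs i - g2 i)))).
rewrite sup_addl.
exact: (addeC (ereal_sup (range (fun i => Gamma2 xs i - g2 i))) (ereal_sup (range (fun i => Gamma1 xs i - g1 i)))).
Qed.
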